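(* Let $A$ be a finite nonempty subset of $(0,\infty)$ and let $f:A\to[0,\infty)$. Let $f\circ f$ denote the function defined on $A_2=\{a\in A: f(a)\in A\}$ by $a\mapsto f(f(a))$, and let $h_f=\{(f(a)/a,\,a):a\in A\}$. Then $h_f=f\circ f$ (i.e. $\{(f(a)/a,a):a\in A\}=\{(a,f(f(a))):a\in A_2\}$) if and only if $A=\{1\}$ and $f(1)=1$, i.e. $f=\{(1,1)\}$.
   Context: For a function $f$ on a finite set $A\subset(0,\infty)$, the Hirsch function $h_f$ is defined exactly at the points $f(a)/a$, $a\in A$, and maps $f(a)/a$ to $a$. Equality of functions means same domain and same values. *)

(* Defs.v *)
From HB Require Import structures.
From mathcomp Require Import all_boot all_order all_algebra.
From mathcomp Require Import all_classical all_reals.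
Set Implicit Arguments. Unset Strict Implicit. Unset Printing Implicit Defensive.
Import Order.TTheory GRing.Theory Num.Theory.
Local Open Scope ring_scope.
Local Open Scope classical_set_scope.

Definition hirsch_graph {R : realType} (A : set R) (f : R -> R) : set (R * R) :=
  [set (f a / a, a) | a in A].

Definition comp_graph {R : realType} (A : set R) (f : R -> R) : set (R * R) :=
  [set (a, f (f a)) | a in [set a | A a /\ A (f a)]].

(* Main.v *)
Require Import Defs.
From HB Require Import structures.
From mathcomp Require Import all_boot all_order all_algebra.
From mathcomp Require Import all_classical all_reals.
From mathcomp Require Import exp lra.
Import Order.TTheory GRing.Theory Num.Theory.
Local Open Scope ring_scope.
Local Open Scope classical_set_scope.
Set Implicit Arguments.

Lemma perm_map_in (R : realType) (s : seq R) (F : R -> R) :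
  uniq s -> (forall x, x \in s -> F x \in s) -> {in s &, injective F} ->
  perm_eq (map F s) s.
Proof.
move=> us Fs Fi.
have um : uniq (map F s) by rewrite map_inj_in_uniq.
apply: uniq_perm => //.
have sub : {subset map F s <= s} by move=> y /mapP [x xs ->]; exact: Fs.
by have [_ ] := uniq_min_size um sub (eq_leq (esym (size_map F s))).
Qed.

Lemma sum_reindex (R : realType) (s : seq R) (F : R -> R) (h : R -> R) :
  uniq s -> (forall x, x \in s -> F x \in s) -> {in s &, injective F} ->
  \sum_(a <- s) h (F a) = \sum_(a <- s) h a.
Proof.
move=> us Fs Fi; rewrite -(big_map F xpredT h); apply: perm_big.
exact: perm_map_in.
Qed.

Unset Implicit Arguments.
Theorem theorem10 (R : realType) (A : set R) (f : R -> R)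
  (hAfin : finite_set A) (hAne : A !=set0)
  (hApos : forall a, A a -> 0 < a)
  (hfnn : forall a, A a -> 0 <= f a) :
  hirsch_graph A f = comp_graph A f <-> (A = [set 1] /\ f 1 = 1).
Proof.
split; last first.
  move=> [-> f1]; rewrite /hirsch_graph /comp_graph.
  apply/seteqP; split => [[x y]|[x y]] /= [a].
    move=> -> [<- <-]; exists 1; first by split => //; rewrite f1.
    by rewrite f1 divr1 f1.
  move=> [-> _] [<- <-]; exists 1 => //.
  by rewrite f1 divr1 f1.
move=> H.
set s := finmap.enum_fset (fset_set A).
have us : uniq s by exact: finmap.fset_uniq.
have sA : forall x, (x \in s) = `[< A x >].
  move=> x; rewrite /s; have := in_fset_set hAfin x.
  by move=> ->; apply/idP/asboolP => [/set_mem|/mem_set].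
have As : forall x, A x -> x \in s by move=> x Ax; rewrite sA; apply/asboolP.
have sA' : forall x, x \in s -> A x by move=> x; rewrite sA => /asboolP.
set g := fun a => f a / a.
have hkey : forall a, A a -> [/\ A (g a), A (f (g a)) & f (f (g a)) = a].
  move=> a Aa.
  have : hirsch_graph A f (g a, a) by exists a.
  by rewrite H => -[b [Ab Afb]] [eb ea]; rewrite -eb.
have gs : forall x, x \in s -> g x \in s.
  by move=> x /sA' /hkey [? _ _]; exact: As.
have gi : {in s &, injective g}.
  move=> x y /sA' /hkey [_ _ ex] /sA' /hkey [_ _ ey] e.
  by rewrite -ex -ey e.
have gsurj : forall b, A b -> exists2 a, A a & b = g a.
  move=> b /As; rewrite -(perm_mem (perm_map_in us gs gi)) => /mapP [a as' ->].
  by exists a => //; exact: sA'.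
have fA : forall b, A b -> A (f b).
  by move=> b /gsurj [a /hkey [_ ? _] ->].
have fs : forall x, x \in s -> f x \in s by move=> x /sA' /fA /As.
have fi : {in s &, injective f}.
  move=> x y /sA' /gsurj [a Aa ->] /sA' /gsurj [b Ab ->] e.
  have [_ _ ea] := hkey a Aa; have [_ _ eb] := hkey b Ab.
  by move: ea eb; rewrite e => -> ->.
have gff : forall z, A z -> g (f (f z)) = z.
  move=> z Az; have Afz := fA _ Az; have Affz := fA _ Afz.
  have [Ag Afg e] := hkey _ Affz.
  apply: (fi); rewrite ?As //.
  apply: (fi); rewrite ?As //; exact: (fA).
set u := fun x : R => ln x.
have ufg : forall a, A a -> u (f a) = u a + u (g a).
  move=> a Aa; have [Ag _ _] := hkey a Aa.
  rewrite /u -lnM ?posrE; try exact: hApos.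
  by rewrite /g mulrC divfK // gt_eqF // hApos.
set S2 := \sum_(a <- s) u a ^+ 2.
set Q := \sum_(a <- s) u a * u (g a).
have e1 : S2 = S2 + (Q *+ 2) + S2.
  transitivity (\sum_(a <- s) u (f a) ^+ 2).
    by rewrite (sum_reindex (fun x => u x ^+ 2) us fs fi).
  rewrite big_seq_cond (eq_bigr (fun a => u a ^+ 2 + (u a * u (g a)) *+ 2 + u (g a) ^+ 2)); last first.
    by move=> a /andP [/sA' Aa _]; rewrite ufg // sqrrD.
  rewrite -big_seq_cond !big_split /= /S2 /Q mulr2n.
  by rewrite (sum_reindex (fun x => u x ^+ 2) us gs gi).
set P1 := \sum_(a <- s) u a * u (f a).
set P2 := \sum_(a <- s) u a * u (f (f a)).
have e2 : P1 = S2 + Q.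
  rewrite /P1 big_seq_cond (eq_bigr (fun a => u a ^+ 2 + u a * u (g a))); last first.
    by move=> a /andP [/sA' Aa _]; rewrite ufg // mulrDr expr2.
  by rewrite -big_seq_cond big_split.
have e3 : P2 = S2 + Q + P1.
  rewrite /P2 big_seq_cond (eq_bigr (fun a => u a ^+ 2 + u a * u (g a) + u a * u (g (f a)))); last first.
    move=> a /andP [/sA' Aa _]; rewrite (ufg _ (fA _ Aa)) (ufg _ Aa) !mulrDr expr2 //.
  rewrite -big_seq_cond !big_split /=; congr (_ + _).
  rewrite -(sum_reindex (fun y => u y * u (g (f y))) us fs fi) /P1.
  rewrite big_seq_cond [RHS]big_seq_cond; apply: eq_bigr => a /andP [/sA' Aa _].
  by rewrite gff // mulrC.
have e4 : P2 = Q.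
  rewrite /P2 -(sum_reindex (fun y => u y * u (f (f y))) us gs gi) /Q.
  rewrite big_seq_cond [RHS]big_seq_cond; apply: eq_bigr => a /andP [/sA' Aa _].
  by have [_ _ ->] := hkey a Aa; rewrite mulrC.
have S20 : S2 = 0 by move: e1; rewrite -e4 e3 e2; lra.
have all1 : forall a, A a -> a = 1.
  move=> a Aa.
  have : all (fun i => u i ^+ 2 == 0) s.
    rewrite -(@psumr_eq0 _ _ s xpredT (fun i => u i ^+ 2)); first by rewrite -/S2 S20.
    by move=> i _; exact: sqr_ge0.
  move/allP => /(_ a (As a Aa)); rewrite sqrf_eq0 /u => /eqP l0.
  apply: ln_inj; rewrite ?posrE ?ltr01 ?hApos // ln1 //.
have A1 : A = [set 1].
  apply/seteqP; split => x /=; first exact: all1.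
  by move=> ->; case: hAne => a Aa; rewrite -(all1 a Aa).
split => //; apply: all1; apply: fA; rewrite A1 //.
Qed.
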